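(* Let $\langle A;\cdot\rangle$ be a semigroup which is an Abelian algebra. Then $\langle A;\cdot\rangle$ is a Hamiltonian algebra if and only if $\langle A;\cdot\rangle$ is an inflation of a subsemigroup which is a rectangular band of periodic commutative groups, and the product of any two idempotents of $A$ is an idempotent.
   Context: A semigroup $\langle T;\cdot\rangle$ is a rectangular band of semigroups $T_{i\lambda}$ if $\{T_{i\lambda}\mid i\in I,\lambda\in\Lambda\}$ is a partition of $T$ into subsemigroups with $T_{i\lambda}\cdot T_{j\mu}\subseteq T_{i\mu}$ for all $i,j\in I$, $\lambda,\mu\in\Lambda$; it is a rectangular band of periodic commutative groups if each $\langle T_{i\lambda};\cdot\rangle$ is a commutative group all of whose elements have finite order. A semigroup $\langle A;\cdot\rangle$ is an inflation of a subsemigroup $\langle B;\cdot\rangle$ if there is a partition $\{X_b\mid b\in B\}$ of $A$ with $b\in X_b$ and $x\cdot y=a\cdot b$ for all $a,b\in B$, $x\in X_a$, $y\in X_b$. An idempotent is $e$ with $ee=e$. A polynomial operation of an algebra is an operation obtained from a term by substituting elements of the algebra for some of its variables. An algebra is called Abelian if for every polynomial operation $t(x,y_1,\ldots,y_n)$ and all elements $u,v,c_1,\ldots,c_n,d_1,\ldots,d_n$ of the algebra, $t(u,c_1,\ldots,c_n)=t(u,d_1,\ldots,d_n)$ implies $t(v,c_1,\ldots,c_n)=t(v,d_1,\ldots,d_n)$. Subalgebras of a semigroup are its nonempty subsets closed under $\cdot$; an algebra is called Hamiltonian if the universe of every subalgebra is an equivalence class (block) of some congruence of the algebra. *)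

(* Defs.v *)
From Stdlib Require Import Arith.

Set Implicit Arguments.

Definition associative (A : Type) (op : A -> A -> A) : Prop :=
  forall x y z, op x (op y z) = op (op x y) z.

(* x ^ (n+1) *)
Fixpoint spow (A : Type) (op : A -> A -> A) (x : A) (n : nat) : A :=
  match n with
  | O => x
  | S k => op (spow op x k) x
  end.

(* Polynomial operations: terms in variables (indexed by nat) with
   constants from A. *)
Inductive pterm (A : Type) : Type :=
| PVar : nat -> pterm A
| PCst : A -> pterm A
| PMul : pterm A -> pterm A -> pterm A.

Fixpoint peval (A : Type) (op : A -> A -> A) (env : nat -> A) (t : pterm A) : A :=
  match t with
  | PVar _ n => env n
  | PCst a => a
  | PMul t1 t2 => op (peval op env t1) (peval op env t2)
  end.

(* environment sending variable 0 (x) to u and variable (k+1) (y_{k+1}) to c k *)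
Definition scons (A : Type) (u : A) (c : nat -> A) : nat -> A :=
  fun i => match i with O => u | S k => c k end.

Definition abelian_alg (A : Type) (op : A -> A -> A) : Prop :=
  forall (t : pterm A) (u v : A) (c d : nat -> A),
    peval op (scons u c) t = peval op (scons u d) t ->
    peval op (scons v c) t = peval op (scons v d) t.

Definition congruence (A : Type) (op : A -> A -> A) (R : A -> A -> Prop) : Prop :=
  (forall x, R x x) /\ (forall x y, R x y -> R y x) /\
  (forall x y z, R x y -> R y z -> R x z) /\
  (forall x x' y y', R x x' -> R y y' -> R (op x y) (op x' y')).

Definition subalgebra (A : Type) (op : A -> A -> A) (B : A -> Prop) : Prop :=
  (exists b, B b) /\ (forall x y, B x -> B y -> B (op x y)).

Definition hamiltonian (A : Type) (op : A -> A -> A) : Prop :=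
  forall B : A -> Prop, subalgebra op B ->
    exists (R : A -> A -> Prop) (a : A),
      congruence op R /\ forall x, B x <-> R a x.

(* The subsemigroup T (a predicate on A) is a rectangular band of periodic
   commutative groups: T is partitioned into blocks
   T_{i,l} = {x in T | fi x = i /\ fl x = l}, (i,l) in I x L, with
   T_{i,l} T_{j,m} included in T_{i,m}, and each block a periodic commutative
   group under op. *)
Definition rect_band_pcgroups (A : Type) (op : A -> A -> A) (T : A -> Prop) : Prop :=
  exists (I L : Type) (fi : A -> I) (fl : A -> L),
    (forall x y, T x -> T y -> fi (op x y) = fi x /\ fl (op x y) = fl y) /\
    (forall (i : I) (l : L),
       let blk := fun x => T x /\ fi x = i /\ fl x = l in
       exists e, blk e /\
         (forall x, blk x -> op e x = x /\ op x e = x) /\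
         (forall x, blk x -> exists y, blk y /\ op x y = e /\ op y x = e) /\
         (forall x y, blk x -> blk y -> op x y = op y x) /\
         (forall x, blk x -> exists n, spow op x n = e)).

(* A is an inflation of the subsemigroup B: partition {X_b | b in B} of A,
   given by r : A -> A with X_b = r^{-1}(b), b in X_b, and
   x * y = a * b for x in X_a, y in X_b. *)
Definition inflation_of (A : Type) (op : A -> A -> A) (B : A -> Prop) : Prop :=
  exists r : A -> A,
    (forall x, B (r x)) /\ (forall b, B b -> r b = b) /\
    (forall x y, op x y = op (r x) (r y)).

Definition idempotent (A : Type) (op : A -> A -> A) (e : A) : Prop := op e e = e.

(* Main.v *)
Require Import Defs.
From Stdlib Require Import Arith Lia ProofIrrelevance IndefiniteDescription.

Lemma spow_add (A : Type) (op : A -> A -> A) (Hassoc : forall x y z, op x (op y z) = op (op x y) z) x a b :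
  spow op x (a + S b) = op (spow op x a) (spow op x b).
Proof.
  induction b as [|b IH].
  - rewrite Nat.add_1_r. reflexivity.
  - replace (a + S (S b)) with (S (a + S b)) by lia.
    change (op (spow op x (a + S b)) x = op (spow op x a) (op (spow op x b) x)).
    rewrite IH. symmetry; apply Hassoc.
Qed.

Lemma spow_comm (A : Type) (op : A -> A -> A) (Hassoc : forall x y z, op x (op y z) = op (op x y) z) x n :
  op x (spow op x n) = spow op x (S n).
Proof. exact (eq_sym (spow_add A op Hassoc x 0 n)). Qed.

Lemma spow_lmul (A : Type) (op : A -> A -> A) (Hassoc : forall x y z, op x (op y z) = op (op x y) z) e x n :
  op e x = x -> op e (spow op x n) = spow op x n.
Proof.
  intro H. induction n as [|n IH]; simpl; [exact H|].
  rewrite Hassoc, IH. reflexivity.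
Qed.

Lemma spow_rmul (A : Type) (op : A -> A -> A) (Hassoc : forall x y z, op x (op y z) = op (op x y) z) e x n :
  op x e = x -> op (spow op x n) e = spow op x n.
Proof.
  intro H. induction n as [|n IH]; simpl; [exact H|].
  rewrite <- Hassoc, H. reflexivity.
Qed.

Lemma spow_idem (A : Type) (op : A -> A -> A) e n :
  op e e = e -> spow op e n = e.
Proof.
  intro H. induction n as [|n IH]; simpl; [reflexivity|]. rewrite IH. exact H.
Qed.

Lemma spow_closed (A : Type) (op : A -> A -> A) (P : A -> Prop) x n :
  (forall a b, P a -> P b -> P (op a b)) -> P x -> P (spow op x n).
Proof.
  intros Hc Hx. induction n as [|n IH]; simpl; auto.
Qed.

Lemma spow_sq (A : Type) (op : A -> A -> A) (Hassoc : forall x y z, op x (op y z) = op (op x y) z) x n :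
  spow op (op x x) n = spow op x (n + S n).
Proof.
  induction n as [|n IH]; [reflexivity|].
  replace (S n + S (S n)) with (S (S (n + S n))) by lia.
  change (op (spow op (op x x) n) (op x x) = op (op (spow op x (n + S n)) x) x).
  rewrite IH, Hassoc. reflexivity.
Qed.

Lemma per_idem (A : Type) (op : A -> A -> A) (Hassoc : forall x y z, op x (op y z) = op (op x y) z) x i k :
  spow op x i = spow op x (i + S k) ->
  exists m, op (spow op x m) (spow op x m) = spow op x m.
Proof.
  intro H.
  assert (Hs : forall t, spow op x (i + t) = spow op x (i + t + S k)).
  { induction t as [|t IH].
    - rewrite Nat.add_0_r. exact H.
    - replace (i + S t) with (S (i + t)) by lia.
      replace (S (i + t) + S k) with (S (i + t + S k)) by lia.
      simpl. rewrite IH. reflexivity. }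
  assert (Hq : forall q t, spow op x (i + t + q * S k) = spow op x (i + t)).
  { induction q as [|q IH]; intro t.
    - rewrite Nat.mul_0_l, Nat.add_0_r. reflexivity.
    - replace (i + t + S q * S k) with (i + (t + S k) + q * S k) by lia.
      rewrite IH. replace (i + (t + S k)) with (i + t + S k) by lia.
      symmetry. apply Hs. }
  exists (i * S k + k).
  rewrite <- spow_add by exact Hassoc.
  replace (i * S k + k + S (i * S k + k)) with (i + (i * k + k) + S i * S k) by nia.
  rewrite Hq. f_equal. nia.
Qed.

Lemma ham_per (A : Type) (op : A -> A -> A) (Hassoc : forall x y z, op x (op y z) = op (op x y) z) :
  hamiltonian op -> forall a, exists i k, spow op a i = spow op a (i + S k).
Proof.
  intros H a.
  set (C := fun z => z = spow op a 2 \/ exists n, z = spow op a (4 + n)).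
  assert (HC : subalgebra op C).
  { split.
    - exists (spow op a 2). left; reflexivity.
    - intros x y [Hx|[n Hx]] [Hy|[n' Hy]]; subst; rewrite <- spow_add by exact Hassoc;
        right.
      + exists 1. reflexivity.
      + exists (3 + n'). f_equal; lia.
      + exists (3 + n). f_equal; lia.
      + exists (5 + n + n'). f_equal; lia. }
  destruct (H C HC) as [R [a0 [[Rr [Rs [Rt Rc]]] HR]]].
  assert (h2 : R a0 (spow op a 2)) by (apply HR; left; reflexivity).
  assert (h4 : R a0 (spow op a 4)) by (apply HR; right; exists 0; reflexivity).
  assert (h5 : R a0 (spow op a 5)) by (apply HR; right; exists 1; reflexivity).
  assert (h24 : R (spow op a 2) (spow op a 4)) by eauto.
  assert (h35 : R (spow op a 3) (spow op a 5)).
  { pose proof (Rc a a _ _ (Rr a) h24) as X.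
    rewrite !spow_comm in X by exact Hassoc. exact X. }
  assert (h3 : C (spow op a 3)) by (apply HR; eauto).
  destruct h3 as [h3|[n h3]].
  - exists 2, 0. symmetry. exact h3.
  - exists 3, n. exact h3.
Qed.

Lemma tc2 (A : Type) (op : A -> A -> A) (Hab : abelian_alg op) u v c d :
  op u c = op u d -> op v c = op v d.
Proof.
  intro H. exact (Hab (PMul (PVar A 0) (PVar A 1)) u v (fun _ => c) (fun _ => d) H).
Qed.

Lemma tc3 (A : Type) (op : A -> A -> A) (Hab : abelian_alg op) u v x1 x2 d1 d2 :
  op (op x1 u) x2 = op (op d1 u) d2 -> op (op x1 v) x2 = op (op d1 v) d2.
Proof.
  intro H.
  exact (Hab (PMul (PMul (PVar A 1) (PVar A 0)) (PVar A 2)) u v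
           (fun k => match k with 0 => x1 | _ => x2 end)
           (fun k => match k with 0 => d1 | _ => d2 end) H).
Qed.

Lemma L1 (A : Type) (op : A -> A -> A) (Hassoc : forall x y z, op x (op y z) = op (op x y) z) (Hab : abelian_alg op)
  g (Hg : op g g = g) v z : op v z = op v (op g z).
Proof.
  apply (tc2 A op Hab g). rewrite Hassoc, Hg. reflexivity.
Qed.

Lemma grp_comm (A : Type) (op : A -> A -> A) (Hassoc : forall x y z, op x (op y z) = op (op x y) z) (Hab : abelian_alg op)
  e x xi y : op e e = e -> op x e = x -> op x xi = e -> op xi x = e ->
  op e y = y -> op y e = y -> op x y = op y x.
Proof.
  intros He Hxe Hxi Hix Hey Hye.
  assert (H : op (op x y) xi = op (op e y) e).
  { apply (tc3 A op Hab e). rewrite Hxe, Hxi, He, He. reflexivity. }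
  rewrite Hey, Hye in H.
  rewrite <- Hye at 1. rewrite <- Hix.
  rewrite !Hassoc, H. reflexivity.
Qed.

Definition EE {A : Type} (op : A -> A -> A) (m : A -> nat) x := spow op x (m x).
Definition rr {A : Type} (op : A -> A -> A) (m : A -> nat) x := op x (EE op m x).

Lemma EE_idem (A : Type) (op : A -> A -> A) (m : A -> nat)
  (Hm : forall x, op (spow op x (m x)) (spow op x (m x)) = spow op x (m x)) x :
  op (EE op m x) (EE op m x) = EE op m x.
Proof. apply Hm. Qed.

Lemma EE_comm (A : Type) (op : A -> A -> A)
  (Hassoc : forall x y z, op x (op y z) = op (op x y) z) (m : A -> nat) x :
  op x (EE op m x) = op (EE op m x) x.
Proof. unfold EE. rewrite spow_comm by exact Hassoc. reflexivity. Qed.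

Lemma absorb (A : Type) (op : A -> A -> A)
  (Hassoc : forall x y z, op x (op y z) = op (op x y) z) (Hab : abelian_alg op)
  (m : A -> nat) (Hm : forall x, op (spow op x (m x)) (spow op x (m x)) = spow op x (m x))
  e y : op e e = e -> op e y = y -> op y e = y -> EE op m y = e.
Proof.
  intros He Hey Hye.
  assert (h1 : op e (EE op m y) = EE op m y) by (apply spow_lmul; assumption).
  assert (h2 : op (EE op m y) e = EE op m y) by (apply spow_rmul; assumption).
  rewrite <- He. rewrite (L1 A op Hassoc Hab (EE op m y) (Hm y) e e).
  rewrite Hassoc, h1, h2. reflexivity.
Qed.

Lemma Gp (A : Type) (op : A -> A -> A)
  (Hassoc : forall x y z, op x (op y z) = op (op x y) z) (Hab : abelian_alg op)
  (m : A -> nat) (Hm : forall x, op (spow op x (m x)) (spow op x (m x)) = spow op x (m x))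
  v y : op v y = op v (op y (EE op m y)).
Proof.
  apply (tc2 A op Hab (EE op m y)).
  rewrite Hassoc, <- EE_comm by exact Hassoc. rewrite <- Hassoc.
  rewrite (EE_idem A op m Hm). reflexivity.
Qed.

Lemma Gw (A : Type) (op : A -> A -> A)
  (Hassoc : forall x y z, op x (op y z) = op (op x y) z) (Hab : abelian_alg op)
  (m : A -> nat) (Hm : forall x, op (spow op x (m x)) (spow op x (m x)) = spow op x (m x))
  x y : op x y = op (op x y) (EE op m (op x y)).
Proof.
  set (e := EE op m (op x y)).
  assert (H : op (op e x) y = op (op e x) (op y e)).
  { rewrite (Hassoc (op e x) y e), <- (Hassoc e x y).
    rewrite <- (Hassoc e (op x y) e). unfold e. rewrite (EE_comm A op Hassoc m (op x y)).
    rewrite (Hassoc (EE op m (op x y)) (EE op m (op x y))), (EE_idem A op m Hm). reflexivity. }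
  rewrite <- Hassoc. exact (tc2 A op Hab _ x _ _ H).
Qed.

Lemma R3 (A : Type) (op : A -> A -> A)
  (Hassoc : forall x y z, op x (op y z) = op (op x y) z) (Hab : abelian_alg op)
  (m : A -> nat) (Hm : forall x, op (spow op x (m x)) (spow op x (m x)) = spow op x (m x))
  x y : op x y = op (rr op m x) (rr op m y).
Proof.
  unfold rr. rewrite (Gp A op Hassoc Hab m Hm x y).
  rewrite (L1 A op Hassoc Hab (EE op m x) (Hm x) x). apply Hassoc.
Qed.

Lemma medial (A : Type) (op : A -> A -> A)
  (Hassoc : forall x y z, op x (op y z) = op (op x y) z) (Hab : abelian_alg op)
  (m : A -> nat) (Hm : forall x, op (spow op x (m x)) (spow op x (m x)) = spow op x (m x))
  s p q t : op (op (op s p) q) t = op (op (op s q) p) t.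
Proof.
  set (e := EE op m s).
  assert (He : op e e = e) by apply Hm.
  assert (Hins : forall p q, op (op (op s p) q) t =
     op (op s (op (op (op e p) e) (op (op e q) e))) t).
  { intros p0 q0. rewrite <- !Hassoc.
    rewrite (L1 A op Hassoc Hab e He q0 t).
    rewrite (L1 A op Hassoc Hab e He p0 (op q0 (op e t))).
    rewrite (L1 A op Hassoc Hab e He s).
    rewrite !Hassoc. rewrite <- (Hassoc (op (op s e) p0) e e), He. reflexivity. }
  rewrite !Hins. f_equal. f_equal.
  set (X := op (op e p) e). set (Y := op (op e q) e).
  assert (HX1 : op e X = X) by (unfold X; rewrite !Hassoc, He; reflexivity).
  assert (HX2 : op X e = X) by (unfold X; rewrite <- !Hassoc, He; reflexivity).
  assert (HY1 : op e Y = Y) by (unfold Y; rewrite !Hassoc, He; reflexivity).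
  assert (HY2 : op Y e = Y) by (unfold Y; rewrite <- !Hassoc, He; reflexivity).
  assert (HEX : EE op m X = e) by (apply (absorb A op Hassoc Hab m Hm); assumption).
  apply (grp_comm A op Hassoc Hab e X (spow op X (m X + m X))); try assumption.
  - rewrite spow_comm by exact Hassoc.
    replace (S (m X + m X)) with (m X + S (m X)) by lia.
    rewrite spow_add by exact Hassoc. exact (eq_trans (Hm X) HEX).
  - change (spow op X (S (m X + m X)) = e).
    replace (S (m X + m X)) with (m X + S (m X)) by lia.
    rewrite spow_add by exact Hassoc. exact (eq_trans (Hm X) HEX).
Qed.

Definition ctx {A : Type} (op : A -> A -> A) (s : option A) (x : A) (t : option A) : A :=
  let y := match s with None => x | Some a => op a x end in
  match t with None => y | Some b => op y b end.

Lemma inv_prop (A : Type) (op : A -> A -> A)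
  (Hassoc : forall x y z, op x (op y z) = op (op x y) z)
  (m : A -> nat) (Hm : forall x, op (spow op x (m x)) (spow op x (m x)) = spow op x (m x)) c :
  op c (spow op c (m c + m c)) = EE op m c /\ op (spow op c (m c + m c)) c = EE op m c.
Proof.
  split.
  - rewrite spow_comm by exact Hassoc.
    replace (S (m c + m c)) with (m c + S (m c)) by lia.
    rewrite spow_add by exact Hassoc. apply Hm.
  - change (spow op c (S (m c + m c)) = EE op m c).
    replace (S (m c + m c)) with (m c + S (m c)) by lia.
    rewrite spow_add by exact Hassoc. apply Hm.
Qed.

Lemma key (A : Type) (op : A -> A -> A)
  (Hassoc : forall x y z, op x (op y z) = op (op x y) z) (Hab : abelian_alg op)
  (m : A -> nat) (Hm : forall x, op (spow op x (m x)) (spow op x (m x)) = spow op x (m x))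
  (C : A -> Prop) (Hcl : forall x y, C x -> C y -> C (op x y)) c c' s t :
  C c -> C c' -> C (ctx op s c t) -> C (ctx op s c' t).
Proof.
  intros Hc Hc' H.
  set (ci := spow op c (m c + m c)).
  destruct (inv_prop A op Hassoc m Hm c) as [Hci1 Hci2]. fold ci in Hci1, Hci2.
  assert (Cci : C ci) by (apply spow_closed; assumption).
  destruct s as [a|]; destruct t as [b|]; simpl in *.
  - set (W := op (op a c) b) in *.
    set (W' := spow op W (m W + m W)).
    destruct (inv_prop A op Hassoc m Hm W) as [HW1 _]. fold W' in HW1.
    assert (CW' : C W') by (apply spow_closed; assumption).
    assert (Heq : op (op a c') b = op (op (op (op W ci) c') W) W').
    { rewrite <- (Hassoc (op (op W ci) c') W W'), HW1. unfold W.
      rewrite (medial A op Hassoc Hab m Hm (op a c) b ci c').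
      rewrite (medial A op Hassoc Hab m Hm (op (op a c) ci) b c' (EE op m (op (op a c) b))).
      rewrite <- (Hassoc a c ci), Hci1.
      rewrite <- (Hassoc a (EE op m c) c').
      rewrite <- (L1 A op Hassoc Hab (EE op m c) (Hm c) a c').
      rewrite <- (Hassoc (op a c') b). symmetry.
      apply (tc2 A op Hab (op a c)).
      rewrite Hassoc. symmetry. apply (Gw A op Hassoc Hab m Hm). }
    rewrite Heq. auto.
  - assert (Heq : op a c' = op (op (op a c) ci) c').
    { rewrite <- (Hassoc a c ci), Hci1, <- Hassoc.
      apply (L1 A op Hassoc Hab (EE op m c) (Hm c)). }
    rewrite Heq. auto.
  - assert (Heq : op c' b = op c' (op ci (op c b))).
    { rewrite (Hassoc ci c b), Hci2.
      apply (L1 A op Hassoc Hab (EE op m c) (Hm c)). }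
    rewrite Heq. auto.
  - exact Hc'.
Qed.

Lemma ham_of (A : Type) (op : A -> A -> A)
  (Hassoc : forall x y z, op x (op y z) = op (op x y) z) (Hab : abelian_alg op)
  (m : A -> nat) (Hm : forall x, op (spow op x (m x)) (spow op x (m x)) = spow op x (m x)) :
  hamiltonian op.
Proof.
  intros C [[a Ca] Hcl].
  exists (fun x y => forall s t, C (ctx op s x t) <-> C (ctx op s y t)), a.
  split.
  - split; [|split; [|split]].
    + intros x s t. tauto.
    + intros x y H s t. specialize (H s t). tauto.
    + intros x y z H1 H2 s t. specialize (H1 s t). specialize (H2 s t). tauto.
    + intros x x' y y' H1 H2 s t.
      assert (E1 : forall z, ctx op s (op z y) t = ctx op s z (Some (ctx op None y t))).
      { intro z. destruct s as [u|]; destruct t as [v|]; simpl; rewrite ?Hassoc; reflexivity. }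
      assert (E2 : forall z, ctx op s (op x' z) t = ctx op (Some (ctx op s x' None)) z t).
      { intro z. destruct s as [u|]; destruct t as [v|]; simpl; rewrite ?Hassoc; reflexivity. }
      specialize (H1 s (Some (ctx op None y t))).
      specialize (H2 (Some (ctx op s x' None)) t).
      rewrite <- (E1 x), <- (E1 x') in H1. rewrite <- (E2 y), <- (E2 y') in H2. tauto.
  - intro x. split.
    + intros Cx s t. split; apply (key A op Hassoc Hab m Hm C Hcl); auto.
    + intro H. exact (proj1 (H None None) Ca).
Qed.

Lemma struct (A : Type) (op : A -> A -> A)
  (Hassoc : forall x y z, op x (op y z) = op (op x y) z) (Hab : abelian_alg op)
  (m : A -> nat) (Hm : forall x, op (spow op x (m x)) (spow op x (m x)) = spow op x (m x))
  (c0 : A) :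
  exists B : A -> Prop, subalgebra op B /\ inflation_of op B /\ rect_band_pcgroups op B.
Proof.
  set (B := fun z => exists a b, z = op a b).
  assert (Bcl : forall x y, B x -> B y -> B (op x y)) by (intros x y _ _; exists x, y; reflexivity).
  assert (Br : forall x, B (rr op m x)) by (intro x; exists x, (EE op m x); reflexivity).
  assert (rfix : forall z, B z -> rr op m z = z).
  { intros z [a [b ->]]. unfold rr. symmetry. apply (Gw A op Hassoc Hab m Hm). }
  assert (Bgr : forall z, B z -> op z (EE op m z) = z) by (intros z Hz; exact (rfix z Hz)).
  assert (Bgl : forall z, B z -> op (EE op m z) z = z).
  { intros z Hz. rewrite <- (EE_comm A op Hassoc m z). auto. }
  assert (BE : forall z, B z -> B (EE op m z)) by (intros z Hz; unfold EE; apply spow_closed; auto).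
  assert (Eid : forall e, op e e = e -> EE op m e = e) by (intros e He; unfold EE; apply spow_idem; auto).
  exists B. split; [|split].
  - split; [exists (op c0 c0), c0, c0; reflexivity | exact Bcl].
  - exists (rr op m). split; [exact Br|split; [exact rfix|]].
    intros x y. apply (R3 A op Hassoc Hab m Hm).
  - set (f0 := EE op m c0).
    set (fiA := fun x => op (EE op m (rr op m x)) f0).
    set (flA := fun x => op f0 (EE op m (rr op m x))).
    assert (fiB : forall x, B x -> fiA x = op (EE op m x) f0)
      by (intros x Hx; unfold fiA; rewrite rfix; auto).
    assert (flB : forall x, B x -> flA x = op f0 (EE op m x))
      by (intros x Hx; unfold flA; rewrite rfix; auto).
    assert (fi_mul : forall x y, B x -> B y -> fiA (op x y) = fiA x).
    { intros x y Hx Hy. rewrite !fiB by auto.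
      assert (H1 : op (EE op m x) (EE op m (op x y)) = EE op m (op x y)).
      { apply spow_lmul; auto. rewrite Hassoc, Bgl; auto. }
      rewrite (L1 A op Hassoc Hab (EE op m (op x y)) (Hm _) (EE op m x) f0).
      rewrite Hassoc, H1. reflexivity. }
    assert (fl_mul : forall x y, B x -> B y -> flA (op x y) = flA y).
    { intros x y Hx Hy. rewrite !flB by auto.
      assert (H1 : op (EE op m (op x y)) (EE op m y) = EE op m (op x y)).
      { apply spow_rmul; auto. rewrite <- Hassoc, Bgr; auto. }
      rewrite (L1 A op Hassoc Hab (EE op m (op x y)) (Hm _) f0 (EE op m y)).
      rewrite H1. reflexivity. }
    assert (sameE : forall x y, B x -> B y -> fiA x = fiA y -> flA x = flA y ->
                    EE op m x = EE op m y).
    { intros x y Hx Hy H1 H2. rewrite !fiB in H1 by auto. rewrite !flB in H2 by auto.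
      transitivity (op (EE op m x) (EE op m x)); [symmetry; apply Hm|].
      rewrite (L1 A op Hassoc Hab f0 (Hm c0) (EE op m x) (EE op m x)).
      rewrite Hassoc, H1, <- Hassoc, H2.
      rewrite <- (L1 A op Hassoc Hab f0 (Hm c0) (EE op m y) (EE op m y)). apply Hm. }
    exists {i : A | exists x, i = fiA x}, {l : A | exists x, l = flA x},
      (fun x => exist _ (fiA x) (ex_intro _ x eq_refl)),
      (fun x => exist _ (flA x) (ex_intro _ x eq_refl)).
    split.
    + intros x y Hx Hy. split; apply subset_eq_compat; auto.
    + intros [i0 Hi0] [l0 Hl0]. cbv zeta.
      destruct Hi0 as [x1 Hx1]. destruct Hl0 as [x2 Hx2].
      set (p := op (rr op m x1) (rr op m x2)).
      assert (Bp : B p) by (apply Bcl; auto).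
      assert (Hpi : fiA p = i0).
      { unfold p. rewrite fi_mul by auto. rewrite Hx1. unfold fiA. rewrite rfix; auto. }
      assert (Hpl : flA p = l0).
      { unfold p. rewrite fl_mul by auto. rewrite Hx2. unfold flA. rewrite rfix; auto. }
      set (e := EE op m p).
      assert (He : op e e = e) by apply Hm.
      assert (blk_iff : forall z,
        (B z /\ exist (fun i => exists x, i = fiA x) (fiA z) (ex_intro _ z eq_refl) =
                exist _ i0 (ex_intro _ x1 Hx1) /\
                exist (fun l => exists x, l = flA x) (flA z) (ex_intro _ z eq_refl) =
                exist _ l0 (ex_intro _ x2 Hx2)) <-> (B z /\ EE op m z = e)).
      { intro z. split.
        - intros [Bz [H1 H2]]. split; auto.
          apply (f_equal (@proj1_sig _ _)) in H1. apply (f_equal (@proj1_sig _ _)) in H2.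
          simpl in H1, H2. apply sameE; auto; congruence.
        - intros [Bz Hz]. split; auto. split; apply subset_eq_compat.
          + rewrite <- Hpi, !fiB, Hz by auto. reflexivity.
          + rewrite <- Hpl, !flB, Hz by auto. reflexivity. }
      exists e. split; [|split; [|split; [|split]]].
      * apply blk_iff. split; [apply BE; auto| apply Eid; auto].
      * intros x Hx. apply blk_iff in Hx. destruct Hx as [Bx Ex].
        rewrite <- Ex. auto.
      * intros x Hx. apply blk_iff in Hx. destruct Hx as [Bx Ex].
        exists (spow op x (m x + m x)).
        destruct (inv_prop A op Hassoc m Hm x) as [I1 I2].
        rewrite Ex in I1, I2.
        assert (Hxe : op e x = x) by (rewrite <- Ex; auto).
        assert (Hex : op x e = x) by (rewrite <- Ex; auto).
        split; [|split; auto].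
        apply blk_iff. split; [apply spow_closed; auto|].
        apply (absorb A op Hassoc Hab m Hm); auto.
        -- apply spow_lmul; auto.
        -- apply spow_rmul; auto.
      * intros x y Hx Hy. apply blk_iff in Hx, Hy.
        destruct Hx as [Bx Ex]. destruct Hy as [By Ey].
        destruct (inv_prop A op Hassoc m Hm x) as [I1 I2].
        rewrite Ex in I1, I2.
        apply (grp_comm A op Hassoc Hab e x (spow op x (m x + m x))); auto.
        -- rewrite <- Ex; auto.
        -- rewrite <- Ey; auto.
        -- rewrite <- Ey; auto.
      * intros x Hx. apply blk_iff in Hx. destruct Hx as [Bx Ex].
        exists (m x). exact Ex.
Qed.

Theorem mainTheorem19 (A : Type) (op : A -> A -> A)
  (Hne : inhabited A) (Hassoc : associative op) (Hab : abelian_alg op) :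
  hamiltonian op <->
  ((exists B : A -> Prop,
      subalgebra op B /\ inflation_of op B /\ rect_band_pcgroups op B) /\
   (forall e f, idempotent op e -> idempotent op f -> idempotent op (op e f))).
Proof.
  assert (Has : forall x y z, op x (op y z) = op (op x y) z) by exact Hassoc.
  split.
  - intro H.
    assert (Per : forall x, exists n, op (spow op x n) (spow op x n) = spow op x n).
    { intro x. destruct (ham_per A op Has H x) as [i [k Hik]].
      exact (per_idem A op Has x i k Hik). }
    destruct (functional_choice _ Per) as [m Hm].
    destruct Hne as [c0].
    split; [exact (struct A op Has Hab m Hm c0)|].
    intros e f He Hf. unfold idempotent in *.
    assert (Hfef : op (op f e) f = f).
    { rewrite <- Has, <- (L1 A op Has Hab e He f f). exact Hf. }
    rewrite <- (Has e f (op e f)), (Has f e f), Hfef. reflexivity.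
  - intros [[B [[_ Bcl] [[r [Br [rB rop]]] [I [L [fi [fl [Hf Hblk]]]]]]]] _].
    assert (Per : forall x, exists n, op (spow op x n) (spow op x n) = spow op x n).
    { intro x.
      assert (By : B (op x x)).
      { rewrite rop. apply Bcl; apply Br. }
      destruct (Hblk (fi (op x x)) (fl (op x x))) as [e [[Be [Hei Hel]] [Hid [_ [_ Hper]]]]].
      destruct (Hper (op x x) (conj By (conj eq_refl eq_refl))) as [n Hn].
      exists (n + S n). rewrite <- (spow_sq A op Has), Hn.
      exact (proj1 (Hid e (conj Be (conj Hei Hel)))). }
    destruct (functional_choice _ Per) as [m Hm].
    exact (ham_of A op Has Hab m Hm).
Qed.
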